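(* Let $R=4t\ge8$ with $t$ an integer, and $\mu=4$ (so $\gcd(R,4)=4$). Then under $G_{R,4}$ the ring $\mathbb Z_R$ has exactly three orbits: $O_0=\{\lambda:\lambda\equiv0\pmod4\}$, $O_1=\{\lambda:\lambda\equiv1\pmod2\}$ and $O_2=\{\lambda:\lambda\equiv2\pmod4\}$; $\mathrm P^+_{R,4}(\lambda)=\mathrm P^+_{R,4}(k)$ for all $\lambda\in O_k$, $k=0,1,2$; these values satisfy $$\mathrm P^+_{R,4}(0)+2\mathrm P^+_{R,4}(1)+\mathrm P^+_{R,4}(2)=\binom{R-1}{3},\quad \mathrm P^+_{R,4}(0)-\mathrm P^+_{R,4}(1)=\frac{R-4}{4},\quad \mathrm P^+_{R,4}(0)-\mathrm P^+_{R,4}(2)=-1,$$ and hence $\mathrm P^+_{R,4}(0)=\frac14\left(\binom{R-1}{3}+\frac{R-6}{2}\right)$, $\mathrm P^+_{R,4}(1)=\frac14\left(\binom{R-1}{3}-\frac{R-2}{2}\right)$, $\mathrm P^+_{R,4}(2)=\frac14\left(\binom{R-1}{3}+\frac{R+2}{2}\right)$.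
   Context: $\mathbb Z_R$ is the ring of integers modulo $R$ and $\mathbb Z_R^*$ its units; $\mathrm P^+_{R,\mu}(\lambda)$ is the number of $\mu$-element subsets of $\mathbb Z_R$ (distinct elements) whose sum in $\mathbb Z_R$ is $\lambda$. $G_{R,\mu}$ is the group of maps $\lambda\mapsto\lambda\ell+u\mu$ on $\mathbb Z_R$ with $\ell\in\mathbb Z_R^*$, $u\in\{0,\dots,R-1\}$; orbits are the equivalence classes of ''$\lambda_2=\lambda_1\varphi$ for some $\varphi\in G_{R,\mu}$''. *)

(* Defs.v *)
(* Z_R is modelled by residues lambda in {0,...,R-1} (nat),
   elements of Z_R as 'I_R, arithmetic taken mod R. *)
From mathcomp Require Import all_boot all_order all_algebra.
Set Implicit Arguments. Unset Strict Implicit. Unset Printing Implicit Defensive.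

Definition Pplus (R mu lambda : nat) : nat :=
  #|[set A : {set 'I_R} | (#|A| == mu) && ((\sum_(x in A) (x : nat)) %% R == lambda %% R)]|.

(* The map lambda |-> lambda*l + u*mu on Z_R, an element of G_{R,mu}
   when l is a unit of Z_R and 0 <= u <= R-1. *)
Definition Gmap (R mu l u lambda : nat) : nat := (lambda * l + u * mu) %% R.

Definition in_G (R l u : nat) : Prop := l < R /\ coprime l R /\ u < R.

Definition same_orbit (R mu lambda1 lambda2 : nat) : Prop :=
  exists l u, in_G R l u /\ lambda2 = Gmap R mu l u lambda1.

Definition orbit_index (lambda : nat) : nat :=
  if odd lambda then 1 else lambda %% 4.

(* Main.v *)
Require Import Defs.
From mathcomp Require Import all_boot all_order all_algebra.
Import GRing.Theory Num.Theory.
From mathcomp Require Import all_field.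
From mathcomp Require Import zify ring lra.

Lemma oiE x : orbit_index x = if x %% 2 == 1 then 1 else x %% 4.
Proof. by rewrite /orbit_index modn2; case: (odd x). Qed.

Lemma orbit_fwd t l u x : 0 < t -> coprime l (4*t) ->
  orbit_index ((x * l + u * 4) %% (4*t)) = orbit_index x.
Proof.
move=> t0 cop.
have lodd : odd l.
  apply/negP => /negP; rewrite -dvdn2 => /negP/negP d2.
  have : 2 %| gcdn l (4*t) by rewrite dvdn_gcd d2 dvdn_mulr.
  by rewrite (eqP cop).
rewrite !oiE.
have h4 : forall y, y %% (4*t) %% 4 = y %% 4.
  by move=> y; apply: modn_dvdm; apply: dvdn_mulr.
have h2 : forall y, y %% (4*t) %% 2 = y %% 2.
  by move=> y; apply: modn_dvdm; apply: (dvdn_trans (isT : 2 %| 4)); apply: dvdn_mulr.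
rewrite h4 h2.
have -> : l = (l %/ 2) * 2 + 1 by rewrite {1}(divn_eq l 2) modn2 lodd.
set k := l %/ 2.
have [q [r [Hx hr]]] : exists q r, x = 4 * q + r /\ r < 4.
  by exists (x %/ 4), (x %% 4); split; [rewrite mulnC -divn_eq | apply: ltn_pmod].
rewrite Hx.
have -> : (4 * q + r) * (k * 2 + 1) + u * 4 = 4 * (q * (k*2+1) + u) + r * (2 * k) + r by ring.
set z := q * (k*2+1) + u.
case: r hr {Hx} => [|[|[|[|]]]] // _; rewrite ?mul0n ?mul1n; do 2 case: ifP; lia.

Qed.

Lemma orbit_iff t x y : 0 < t -> x < 4*t -> y < 4*t ->
  same_orbit (4*t) 4 x y <-> orbit_index x = orbit_index y.
Proof.
move=> t0 hx hy; split.
  by case=> l [u [[_ [cl _]] ->]]; rewrite /Gmap orbit_fwd.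
move=> hoi.
have h4 : forall z, z %% (4*t) %% 4 = z %% 4.
  by move=> z; apply: modn_dvdm; apply: dvdn_mulr.
have [l [hl [cl hxl]]] : exists l, l < 4*t /\ coprime l (4*t) /\ (x * l) %% 4 = y %% 4.
  case: (boolP (x %% 4 == y %% 4)) => e.
    by exists 1; rewrite muln1 coprime1n (eqP e); split => //; lia.
  exists (4*t).-1; split; first lia.
  split; first by apply: coprimePn; lia.
  have H : x * (4 * t).-1 + x = 4 * (t * x).
    rewrite -{2}(muln1 x) -mulnDr addn1 prednK; [ring | lia].
  move: hoi e; rewrite !oiE; do 2 case: ifP; lia.
set m := (x * l) %% (4*t).
have hm : m < 4*t by apply: ltn_pmod; lia.
have hm4 : m %% 4 = y %% 4 by rewrite /m h4.
set u := (y + 4*t - m) %/ 4.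
have hu : u * 4 = y + 4*t - m.
  by apply: divnK; rewrite /dvdn; apply/eqP; lia.
exists l, u; split; first by split => //; split => //; lia.
rewrite /Gmap -modnDml -/m hu.
have -> : m + (y + 4 * t - m) = y + 4*t by lia.
by rewrite modnDr modn_small.
Qed.

Lemma transl R c l m : 0 < R -> m %% R = (l + 4*c) %% R -> Pplus R 4 l <= Pplus R 4 m.
Proof.
move=> R0 hm.
pose f (x : 'I_R) : 'I_R := Ordinal (ltn_pmod (x + c) R0).
have finj : injective f.
  move=> x y /(congr1 val) /= /eqP; rewrite eqn_modDr => /eqP.
  by rewrite !modn_small // => /val_inj.
rewrite /Pplus -(card_imset _ (imset_inj finj)).
apply: subset_leq_card; apply/subsetP => B /imsetP [A]; rewrite inE => /andP [cA sA] ->.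
rewrite inE card_imset // cA /=.
rewrite big_imset /=; last by move=> x y _ _; apply: finj.
rewrite modn_summ big_split /= sum_nat_const (eqP cA) hm.
by rewrite -modnDml (eqP sA) modnDml.
Qed.

Lemma reflP R c l m : 0 < R -> (l + m) %% R = (4*c) %% R -> Pplus R 4 l <= Pplus R 4 m.
Proof.
move=> R0 hm.
pose f (x : 'I_R) : 'I_R := Ordinal (ltn_pmod (c + (R - x)) R0).
have finj : injective f.
  move=> x y /(congr1 val) /= /eqP; rewrite eqn_modDl -(eqn_modDr (x + y)).
  rewrite addnA subnK ?(ltnW (ltn_ord x)) // (addnC x y) addnA subnK ?(ltnW (ltn_ord y)) //.
  rewrite eqn_modDl !modn_small // => /eqP /val_inj //.
rewrite /Pplus -(card_imset _ (imset_inj finj)).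
apply: subset_leq_card; apply/subsetP => B /imsetP [A]; rewrite inE => /andP [cA sA] ->.
rewrite inE card_imset // cA /=.
rewrite big_imset /=; last by move=> x y _ _; apply: finj.
set S := \sum_(x in A) _.
have hS : (S + \sum_(x in A) (x : nat)) %% R = (4 * c) %% R.
  rewrite /S -modnDml modn_summ modnDml -big_split /=.
  rewrite (eq_bigr (fun _ => c + R)); last first.
    by move=> x _; rewrite -addnA subnK // ltnW.
  by rewrite sum_nat_const (eqP cA) mulnDr addnC modnMDl.
rewrite -(eqn_modDr l) -modnDmr -(eqP sA) modnDmr hS -hm addnC.
done.
Qed.

Lemma Pmod4 t l : 0 < t -> l < 4*t -> Pplus (4*t) 4 l = Pplus (4*t) 4 (l %% 4).
Proof.
move=> t0 hl.
have R0 : 0 < 4*t by lia.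
apply/eqP; rewrite eqn_leq; apply/andP; split.
  apply: (transl _ (t - l %/ 4) _ _ R0).
  have -> : l + 4 * (t - l %/ 4) = l %% 4 + 4 * t by lia.
  by rewrite modnDr.
apply: (transl _ (l %/ 4) _ _ R0).
by congr (_ %% _); lia.
Qed.

Lemma Pidx t l : 0 < t -> l < 4*t -> Pplus (4*t) 4 l = Pplus (4*t) 4 (orbit_index l).
Proof.
move=> t0 hl; rewrite Pmod4 // oiE.
have R0 : 0 < 4*t by lia.
case: ifP => h; first last. by [].
have [->|->] : l %% 4 = 1 \/ l %% 4 = 3 by lia.
  done.
apply/eqP; rewrite eqn_leq; apply/andP; split.
  exact: (reflP _ 1 _ _ R0).
exact: (reflP _ 1 _ _ R0).
Qed.

Section BPart.
Local Open Scope ring_scope.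


Lemma prod_period (S : comRingType) (f : nat -> S) p n :
  (forall i, f (i + p)%N = f i) ->
  \prod_(0 <= i < (p * n)%N) f i = (\prod_(0 <= i < p) f i) ^+ n.
Proof.
move=> hf; elim: n => [|n IH]; first by rewrite muln0 big_geq // expr0.
rewrite mulnS addnC (big_cat_nat _ (leq_addr _ _)) //= IH exprSr; congr (_ * _).
rewrite -{1}(add0n (p * n)%N) big_addn addKn; apply: eq_bigr => i _.
elim: n {IH} => [|n IHn]; first by rewrite muln0 addn0.
by rewrite mulnS addnA addnC addnA hf addnC.
Qed.

Lemma sum_period (S : zmodType) (f : nat -> S) p n :
  (forall i, f (i + p)%N = f i) ->
  \sum_(0 <= i < (p * n)%N) f i = (\sum_(0 <= i < p) f i) *+ n.
Proof.
move=> hf; elim: n => [|n IH]; first by rewrite muln0 big_geq.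
rewrite mulnS addnC (big_cat_nat _ (leq_addr _ _)) //= IH mulrSr; congr (_ + _).
rewrite -{1}(add0n (p * n)%N) big_addn addKn; apply: eq_bigr => i _.
elim: n {IH} => [|n IHn]; first by rewrite muln0 addn0.
by rewrite mulnS addnA addnC addnA hf addnC.
Qed.

Lemma gen (T : finType) (w : T -> algC) k :
  \sum_(A : {set T} | #|A| == k) \prod_(x in A) w x =
  (\prod_(x : T) (w x *: 'X + 1))`_k.
Proof.
rewrite (@bigA_distr _ 0 1 *%R +%R) /=.
rewrite (eq_bigr (fun A : {set T} => (\prod_(x in A) w x) *: 'X^#|A|)); last first.
  move=> A _; rewrite -big_mkcond /= scaler_prod prodr_const //.
by rewrite coef_sumMXn.
Qed.

Lemma key (t : nat) (t0 : (0 < t)%N) (e : algC) (he : e ^+ 4 = 1) :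
  \sum_(A : {set 'I_(4*t)} | #|A| == 4%N) e ^+ (\sum_(x in A) (x : nat)) =
  ((Pplus (4*t) 4 0)%:R + (Pplus (4*t) 4 1)%:R * e + (Pplus (4*t) 4 2)%:R * e ^+ 2
    + (Pplus (4*t) 4 1)%:R * e ^+ 3) *+ t.
Proof.
have R0 : (0 < 4 * t)%N by lia.
have eR : e ^+ (4 * t) = 1 by rewrite exprM he expr1n.
rewrite (partition_big (fun A : {set 'I_(4*t)} => Ordinal (ltn_pmod (\sum_(x in A) (x:nat)) R0)) predT) //=.
rewrite (eq_bigr (fun j : 'I_(4*t) => (Pplus (4*t) 4 j)%:R * e ^+ j)); last first.
  move=> j _; rewrite (eq_bigr (fun _ => e ^+ j)); last first.
    by move=> A /andP [_ /eqP <-] /=; rewrite expr_mod.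
  rewrite sumr_const mulr_natl /Pplus; congr (_ *+ _); apply: eq_card => A.
  by rewrite !inE (modn_small (ltn_ord j)).
have -> : \sum_(i < 4*t) (Pplus (4*t) 4 i)%:R * e ^+ i =
  \sum_(0 <= i < 4*t) (Pplus (4*t) 4 i)%:R * e ^+ i by rewrite big_mkord.
rewrite (eq_big_nat _ _ (F2 := fun j => (Pplus (4*t) 4 (orbit_index j))%:R * e ^+ j)); last first.
  by move=> i /andP [_ hi]; rewrite Pidx.
rewrite sum_period; last first.
  move=> i; rewrite exprD he mulr1; congr (_%:R * _); congr (Pplus _ _ _).
  by rewrite !oiE; do 2 case: ifP; lia.
by rewrite !big_nat_recr //= big_geq // add0r expr0 mulr1 expr1.
Qed.

Lemma lhs1 t : \sum_(A : {set 'I_(4*t)} | #|A| == 4%N) 1 ^+ (\sum_(x in A) (x : nat))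
  = ('C(4*t, 4))%:R :> algC.
Proof.
rewrite (eq_bigr (fun _ => 1)) => [|A _]; last by rewrite expr1n.
rewrite sumr_const; congr (_%:R); rewrite -[in RHS](card_ord (4*t)) -card_draws.
by apply: eq_card => A; rewrite inE.
Qed.

Lemma lhs_gen t (e : algC) :
  \sum_(A : {set 'I_(4*t)} | #|A| == 4%N) e ^+ (\sum_(x in A) (x : nat))
  = (\prod_(0 <= x < 4*t) (e ^+ x *: 'X + 1))`_4.
Proof.
rewrite big_mkord -(gen _ (fun x : 'I_(4*t) => e ^+ x)).
by apply: eq_bigr => A _; rewrite prodrXr.
Qed.

Lemma coef_pow4 n : ((1 - 'X^4 : {poly algC}) ^+ n)`_0 = 1 /\
                    ((1 - 'X^4 : {poly algC}) ^+ n)`_4 = - n%:R.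
Proof.
elim: n => [|n [h0 h4]]; first by rewrite expr0 !coef1 oppr0.
rewrite exprS mulrBl mul1r !coefB !coefXnM /= h0 h4 subr0; split => //.
by rewrite mulrSr opprD.
Qed.

Lemma coef_pow2 n : ((1 - 'X^2 : {poly algC}) ^+ n)`_0 = 1 /\
                    ((1 - 'X^2 : {poly algC}) ^+ n)`_2 = - n%:R /\
                    ((1 - 'X^2 : {poly algC}) ^+ n)`_4 = ('C(n, 2))%:R.
Proof.
elim: n => [|n [h0 [h2 h4]]]; first by rewrite expr0 !coef1 oppr0.
rewrite exprS mulrBl mul1r !coefB !coefXnM /= h0 h2 h4 subr0; split => //.
split; first by rewrite mulrSr opprD.
by rewrite binS bin1 natrD opprK.
Qed.

Lemma block4 : \prod_(0 <= x < 4) ('i ^+ x *: 'X + 1) = (1 - 'X^4 : {poly algC}).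
Proof.
rewrite !big_nat_recr //= big_geq // mul1r expr0 expr1 scale1r.
have i3 : 'i ^+ 3 = - 'i :> algC by rewrite exprS sqrCi mulrN1.
rewrite sqrCi i3 scaleN1r scaleNr -mul_polyC.
set E := ('i)%:P.
have hE : E * E = -1 by rewrite -polyCM mulCii polyCN polyC1.
have -> : ('X + 1) * (E * 'X + 1) * (- 'X + 1) * (- (E * 'X) + 1) =
  (1 - 'X ^+ 2) * (1 - (E * E) * 'X ^+ 2) :> {poly algC} by ring.
rewrite hE; ring.
Qed.

Lemma block2 : \prod_(0 <= x < 2) ((-1) ^+ x *: 'X + 1) = (1 - 'X^2 : {poly algC}).
Proof.
rewrite !big_nat_recr //= big_geq // mul1r expr0 expr1 scale1r scaleN1r.
ring.
Qed.



Lemma sqrrN1 : (-1) ^+ 2 = 1 :> algC.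
Proof. by rewrite sqrrN expr1n. Qed.

Lemma nat_of_alg (a b : nat) (L M : algC) : L = M -> (a%:R - b%:R = L - M) -> a = b.
Proof. by move=> ->; rewrite subrr => /eqP; rewrite subr_eq0 eqr_nat => /eqP. Qed.

Lemma nat_of_alg2 (a b t : nat) (L X : algC) : L = X *+ t ->
  (a%:R - b%:R = L - X * t%:R) -> a = b.
Proof. by move=> ->; rewrite mulr_natr subrr => /eqP; rewrite subr_eq0 eqr_nat => /eqP. Qed.

Lemma nat_facts t : (0 < t)%N ->
  let P0 := Pplus (4*t) 4 0 in let P1 := Pplus (4*t) 4 1 in let P2 := Pplus (4*t) 4 2 in
  [/\ 'C(4*t, 4) = ((P0 + 2 * P1 + P2) * t)%N,
      (P0 * t + t = P2 * t)%N &
      ('C(2*t, 2) + 2 * P1 * t = (P0 + P2) * t)%N].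
Proof.
move=> t0 P0 P1 P2.
have k1 := key t t0 _ (expr1n _ 4).
rewrite lhs1 in k1.
have i4 : 'i ^+ 4 = 1 :> algC by rewrite (exprM _ 2 2) sqrCi sqrrN1.
have ki := key t t0 _ i4.
rewrite lhs_gen (prod_period _ _ 4 t) in ki; last by move=> i; rewrite exprD i4 mulr1.
rewrite block4 (coef_pow4 t).2 in ki.
have i3 : 'i ^+ 3 = - 'i :> algC by rewrite exprS sqrCi mulrN1.
rewrite sqrCi i3 in ki.
have m4 : (-1) ^+ 4 = 1 :> algC by rewrite (exprM _ 2 2) sqrrN1 expr1n.
have km := key t t0 _ m4.
rewrite lhs_gen {1}(_ : (4 * t)%N = (2 * (2 * t))%N) in km; last by rewrite mulnA.
rewrite (prod_period _ _ 2 (2 * t)%N) in km; last by move=> i; rewrite exprD sqrrN1 mulr1.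
rewrite block2 (coef_pow2 (2 * t)%N).2.2 in km.
have m3 : (-1) ^+ 3 = -1 :> algC by rewrite exprS sqrrN1 mulr1.
rewrite sqrrN1 m3 in km.
rewrite -/P0 -/P1 -/P2 in k1 ki km.
clearbody P0 P1 P2.
split.
- apply: (nat_of_alg2 _ _ _ _ _ k1); rewrite natrM !natrD !expr1n; ring.
- apply/esym; apply: (nat_of_alg2 _ _ _ _ _ ki); rewrite !natrD !natrM; ring.
- apply: (nat_of_alg2 _ _ _ _ _ km); rewrite !natrD !natrM; ring.
Qed.

End BPart.

Theorem theorem4p13 (t : nat) (ht : 2 <= t) :
  let R := 4 * t in
  let P0 := Pplus R 4 0 in
  let P1 := Pplus R 4 1 in
  let P2 := Pplus R 4 2 in
  (* exactly three orbits O_0, O_1, O_2 *)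
  (forall lambda1 lambda2, lambda1 < R -> lambda2 < R ->
     same_orbit R 4 lambda1 lambda2 <-> orbit_index lambda1 = orbit_index lambda2)
  /\ (forall lambda, lambda < R -> Pplus R 4 lambda = Pplus R 4 (orbit_index lambda))
  /\ (P0 + 2 * P1 + P2 = 'C(R - 1, 3))%N
  /\ (P0%:Q - P1%:Q = (R%:Q - 4) / 4)%R
  /\ (P0%:Q - P2%:Q = -1)%R
  /\ (P0%:Q = ('C(R - 1, 3)%:Q + (R%:Q - 6) / 2) / 4)%R
  /\ (P1%:Q = ('C(R - 1, 3)%:Q - (R%:Q - 2) / 2) / 4)%R
  /\ (P2%:Q = ('C(R - 1, 3)%:Q + (R%:Q + 2) / 2) / 4)%R.
Proof.
move=> R P0 P1 P2.
have t0 : 0 < t by lia.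
have R0 : 0 < 4 * t by lia.
have [F1 F2 F3] := nat_facts t t0.
rewrite -/R -/P0 -/P1 -/P2 in F1 F2 F3.
have E2 : P0 + 1 = P2.
  by apply/eqP; rewrite -(eqn_pmul2r t0) mulnDl mul1n F2.
have E1 : P0 + 2 * P1 + P2 = 'C(R - 1, 3).
  have hb := mul_bin_diag (4 * t) 3.
  have : (P0 + 2 * P1 + P2) * (4 * t) = 'C(R - 1, 3) * (4 * t).
    by rewrite [RHS]mulnC /R subn1 hb F1; ring.
  by move/eqP; rewrite eqn_pmul2r // => /eqP.
have C2 : 'C(2 * t, 2) = t * (2 * t).-1.
  by rewrite bin2 -mulnA mul2n doubleK.
have E3 : P0 + P2 + 1 = 2 * P1 + 2 * t.
  have : ((2 * t).-1 + 2 * P1) * t = (P0 + P2) * t.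
    by rewrite -F3 C2 mulnDl mulnC.
  by move/eqP; rewrite eqn_pmul2r // => /eqP; lia.
have q1 := congr1 (fun n : nat => (n%:Q)%R) E1.
have q2 := congr1 (fun n : nat => (n%:Q)%R) E2.
have q3 := congr1 (fun n : nat => (n%:Q)%R) E3.
rewrite /= ?PoszD ?PoszM ?intrD ?intrM in q1 q2 q3.
have qR : (R%:Q = 4%:Q * t%:Q)%R by rewrite /R PoszM intrM.
split.
  by move=> l1 l2 h1 h2; apply: orbit_iff.
split.
  by move=> l hl; apply: Pidx.
split; first exact: E1.
have c0 : ((0%Z)%:~R = 0 :> rat)%R by [].
have c1 : ((1%Z)%:~R = 1 :> rat)%R by [].
have c4 : ((4%Z)%:~R = 4 :> rat)%R by [].
rewrite qR; move: q1 q2 q3; rewrite c0 c1 c4 => q1 q2 q3.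
split; first lra.
split; first lra.
split; first lra.
split; lra.
Qed.
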